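(* Let $\rho_{i\to j}(e)$ be a subexpression of the clique-width $k$-expression $e_G$ and let $C,N\in[0,\mathcal{N}]^{k\times q}$. Let $N_e$ be defined by $N_e[i,a]=N[j,a]$ for every color $a$ and $N_e[h,a]=N[h,a]$ for every $h\in[1,k]\setminus\{i\}$ and every color $a$. If $C[i,a]=0$ for all $a\in\mathrm{Colors}$, then $\lambda(\rho_{i\to j}(e),C,N)$ equals the minimum of $\lambda(e,C_e,N_e)$ over all $C_e\in[0,\mathcal{N}]^{k\times q}$ such that $C[j,a]=\min(\mathcal{N},C_e[i,a]+C_e[j,a])$ for all colors $a$ and $C_e[h,a]=C[h,a]$ for all $h\in[1,k]\setminus\{i,j\}$ and all colors $a$. Otherwise, $\lambda(\rho_{i\to j}(e),C,N)=\mathrm{Error}$.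
   Context: Weight set: $(\mathrm{Weights},\preceq,\circledast)$ where $\preceq$ is a total order with a maximum element $\mathrm{Error}$, $\min$ is the minimum w.r.t. $\preceq$ (minimum of an empty set is $\mathrm{Error}$), and $\circledast$ is commutative, associative, has a neutral element, has absorbing element $\mathrm{Error}$, and is monotone. A color-counting 1-locally checkable problem is given by a graph $G$, colors $\mathrm{Colors}=\{a_1,\ldots,a_q\}$, nonempty lists $L_v\subseteq\mathrm{Colors}$, weights $w_{v,a}\in\mathrm{Weights}\setminus\{\mathrm{Error}\}$ ($a\in L_v$), and a function $check(v,a,n_1,\ldots,n_q)\in\{\mathrm{True},\mathrm{False}\}$. $\mathcal{N}\in[1,|V(G)|]$ is an integer with $check(v,a,n_1,\ldots,n_q)=check(v,a,\min(\mathcal{N},n_1),\ldots,\min(\mathcal{N},n_q))$ always. $[x,y]=\{x,\ldots,y\}$. $e_G$ is an irredundant clique-width $k$-expression of $G$ (operations $i(v)$, $\oplus$, $\eta_{i,j}$, $\rho_{i\to j}$ renaming label $i$ to $j$; irredundant means no join adds an already existing edge), in which every relabeling $\rho_{i\to j}(e)$ has some vertex of $G_e$ of label $j$. For a subexpression $e$, $G_e$ is its labeled graph and $\ell_e(v)$ the label of $v$ in $G_e$. For $C,N\in[0,\mathcal{N}]^{k\times q}$ (rows = labels, columns = colors), a coloring $c$ of $G_e$ with $c(v)\in L_v$ for all $v$ is a $(C,N)$-coloring of $G_e$ if (C1) $\min(\mathcal{N},|\{v\in V(G_e): c(v)=a,\ \ell_e(v)=i\}|)=C[i,a]$ for all $i,a$;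 and (C2) for all $v\in V(G_e)$, $check(v,c(v),n_1,\ldots,n_q)$ holds with $n_j=\min(\mathcal{N},N[\ell_e(v),a_j]+|\{u\in N_{G_e}(v):c(u)=a_j\}|)$. $\lambda(e,C,N)$ is the minimum of $\circledast_{v\in V(G_e)}w_{v,c(v)}$ over all $(C,N)$-colorings $c$ of $G_e$ ($\mathrm{Error}$ if none). *)

(* Defs.v *)
From HB Require Import structures.
From mathcomp Require Import all_boot all_order.
From mathcomp Require Import matrix.
Set Implicit Arguments. Unset Strict Implicit. Unset Printing Implicit Defensive.
Import Order.TTheory.

Definition is_weight_set (d : Order.disp_t) (W : orderType d)
    (Error : W) (op : W -> W -> W) (one : W) : Prop :=
  (forall x : W, (x <= Error)%O) /\
  [/\ commutative op, associative op,
      left_id one op,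
      (forall x, op Error x = Error) &
      (forall x y z : W, (x <= y)%O -> (op x z <= op y z)%O)].

Inductive cwexp (V : Type) (k : nat) : Type :=
  | CVert of 'I_k & V
  | CUnion of cwexp V k & cwexp V k
  | CJoin of 'I_k & 'I_k & cwexp V k
  | CRename of 'I_k & 'I_k & cwexp V k.

Arguments CVert {V k}.
Arguments CUnion {V k}.
Arguments CJoin {V k}.
Arguments CRename {V k}.

Section CW.
Variables (V : finType) (k : nat).

Fixpoint cw_verts (e : cwexp V k) : {set V} :=
  match e with
  | CVert _ v => [set v]
  | CUnion a b => cw_verts a :|: cw_verts b
  | CJoin _ _ a => cw_verts a
  | CRename _ _ a => cw_verts a
  end.

(* labelling l_e (meaningful on cw_verts e) *)
Fixpoint cw_label (e : cwexp V k) : V -> 'I_k :=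
  match e with
  | CVert i _ => fun _ => i
  | CUnion a b => fun u => if u \in cw_verts a then cw_label a u else cw_label b u
  | CJoin _ _ a => cw_label a
  | CRename i j a => fun u => if cw_label a u == i then j else cw_label a u
  end.

Fixpoint cw_edges (e : cwexp V k) : rel V :=
  match e with
  | CVert _ _ => fun _ _ => false
  | CUnion a b => fun u w => cw_edges a u w || cw_edges b u w
  | CJoin i j a => fun u w =>
      cw_edges a u w ||
      [&& u \in cw_verts a, w \in cw_verts a &
          ((cw_label a u == i) && (cw_label a w == j))
          || ((cw_label a u == j) && (cw_label a w == i))]
  | CRename _ _ a => cw_edges a
  end.

Fixpoint cw_wf (e : cwexp V k) : Prop :=
  match e with
  | CVert _ _ => True
  | CUnion a b => [/\ cw_wf a, cw_wf b & [disjoint cw_verts a & cw_verts b]]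
  | CJoin i j a => i != j /\ cw_wf a
  | CRename i j a => i != j /\ cw_wf a
  end.

Fixpoint cw_irredundant (e : cwexp V k) : Prop :=
  match e with
  | CVert _ _ => True
  | CUnion a b => cw_irredundant a /\ cw_irredundant b
  | CJoin i j a => cw_irredundant a /\
      (forall u w, u \in cw_verts a -> w \in cw_verts a ->
         cw_label a u = i -> cw_label a w = j -> ~~ cw_edges a u w)
  | CRename _ _ a => cw_irredundant a
  end.

Fixpoint cw_relabel_ok (e : cwexp V k) : Prop :=
  match e with
  | CVert _ _ => True
  | CUnion a b => cw_relabel_ok a /\ cw_relabel_ok b
  | CJoin _ _ a => cw_relabel_ok a
  | CRename _ j a => cw_relabel_ok a /\ exists2 v, v \in cw_verts a & cw_label a v = j
  end.

Inductive subexp : cwexp V k -> cwexp V k -> Prop :=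
  | subexp_refl e : subexp e e
  | subexp_unionl e a b : subexp e a -> subexp e (CUnion a b)
  | subexp_unionr e a b : subexp e b -> subexp e (CUnion a b)
  | subexp_join e i j a : subexp e a -> subexp e (CJoin i j a)
  | subexp_rename e i j a : subexp e a -> subexp e (CRename i j a).

Definition cw_expression_of (E : rel V) (e : cwexp V k) : Prop :=
  [/\ cw_wf e, cw_verts e = [set: V], (forall u w, cw_edges e u w = E u w),
      cw_irredundant e & cw_relabel_ok e].

End CW.

Section Problem.
Variables (d : Order.disp_t) (W : orderType d) (Error : W)
          (op : W -> W -> W) (one : W).
Variables (V : finType) (k q Nb : nat).
Variables (L : V -> {set 'I_q}) (w : V -> 'I_q -> W)
          (check : V -> 'I_q -> ('I_q -> nat) -> bool).

(* matrices in [0,Nb]^{k x q}: rows = labels, columns = colors *)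
Definition cmat := 'M['I_Nb.+1]_(k, q).

Definition is_CN_coloring (e : cwexp V k) (C N : cmat) (c : {ffun V -> 'I_q}) : bool :=
  [&& [forall v, (v \in cw_verts e) ==> (c v \in L v)],
      [forall i : 'I_k, forall a : 'I_q,
         minn Nb #|[set v in cw_verts e | (c v == a) && (cw_label e v == i)]|
         == C i a] &
      [forall v, (v \in cw_verts e) ==>
         check v (c v) (fun a =>
           minn Nb (N (cw_label e v) a +
                    #|[set u in cw_verts e | cw_edges e v u && (c u == a)]|))]].

Definition weight_of (e : cwexp V k) (c : {ffun V -> 'I_q}) : W :=
  \big[op/one]_(v in cw_verts e) w v (c v).

Definition lambda (e : cwexp V k) (C N : cmat) : W :=
  \big[Order.min/Error]_(c : {ffun V -> 'I_q} | is_CN_coloring e C N c)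
     weight_of e c.

End Problem.

(* Main.v *)
Require Import Defs.
From HB Require Import structures.
From mathcomp Require Import all_boot all_order.
From mathcomp Require Import matrix.
From mathcomp Require Import zify.
From Stdlib Require Import FunctionalExtensionality.
Import Order.TTheory.
Set Implicit Arguments. Unset Strict Implicit.

Lemma subexp_wf (V : finType) k (e1 e2 : cwexp V k) :
  subexp e1 e2 -> cw_wf e2 -> cw_wf e1.
Proof.
elim=> //=.
- by move=> ? ? ? _ IH [] *; apply: IH.
- by move=> ? ? ? _ IH [] *; apply: IH.
- by move=> ? ? ? ? _ IH [] *; apply: IH.
- by move=> ? ? ? ? _ IH [] *; apply: IH.
Qed.

Section BigMin.
Variables (d : Order.disp_t) (W : orderType d) (Error : W).

Lemma bm_le (I : finType) (P : pred I) (F : I -> W) x :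
  (x <= Error)%O -> (forall i, P i -> (x <= F i)%O) ->
  (x <= \big[Order.min/Error]_(i | P i) F i)%O.
Proof.
move=> hE hF; apply: (big_ind (fun y => (x <= y)%O)) => //.
by move=> a b ha hb; rewrite le_min ha hb.
Qed.

Lemma bm_ge (I : finType) (P : pred I) (F : I -> W) i0 :
  P i0 -> (\big[Order.min/Error]_(i | P i) F i <= F i0)%O.
Proof.
move=> Pi0; have : i0 \in index_enum I by rewrite mem_index_enum.
elim: (index_enum I) => [//|a s IH]; rewrite inE big_cons.
case/orP=> [/eqP <-|/IH h]; first by rewrite Pi0 ge_min lexx.
case: ifP => _ //; by rewrite ge_min h orbT.
Qed.
End BigMin.

Section Ren.
Variables (V : finType) (k q Nb : nat) (i j : 'I_k) (e : cwexp V k).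
Hypothesis ij : i != j.

Definition cnt (f : cwexp V k) (c : {ffun V -> 'I_q}) h a :=
  #|[set v in cw_verts f | (c v == a) && (cw_label f v == h)]|.

Lemma cnt_ren c h a : cnt (CRename i j e) c h a =
  if h == i then 0 else if h == j then cnt e c i a + cnt e c j a
  else cnt e c h a.
Proof.
have ji : (j == i) = false by rewrite eq_sym (negbTE ij).
rewrite /cnt /=.
case: ifP => [/eqP -> | hi].
  apply/eqP; rewrite cards_eq0; apply/eqP/setP => v; rewrite !inE.
  case: ifP => [_|/negbT H]; by rewrite ?ji ?(negbTE H) !andbF.
case: ifP => [/eqP -> | hj].
  rewrite (_ : [set _ in _ | _] =
     [set v in cw_verts e | (c v == a) && (cw_label e v == i)] :|:
     [set v in cw_verts e | (c v == a) && (cw_label e v == j)]).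
    rewrite cardsU (_ : _ :&: _ = set0) ?cards0 ?subn0 //.
    apply/setP => v; rewrite !inE.
    set l := cw_label _ v; case: (l =P i) => [->|_]; by rewrite ?(negbTE ij) ?andbF.
  apply/setP => v; rewrite !inE.
  case: ifP => [/eqP ->|H]; rewrite ?H ?eqxx ?(negbTE ij) /=.
    by case: (_ \in _); case: (_ == _).
  by case: (_ \in _); case: (_ == _).
apply: eq_card => v; rewrite !inE.
case: ifP => [/eqP ->|_] //.
by rewrite [j == h]eq_sym hj [i == h]eq_sym hi !andbF.
Qed.

Variables (L : V -> {set 'I_q}) (check : V -> 'I_q -> ('I_q -> nat) -> bool).

Lemma chk_ren (N : 'M['I_Nb.+1]_(k, q)) (c : {ffun V -> 'I_q}) v :
  let Ne : 'M['I_Nb.+1]_(k, q) :=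
    (\matrix_(h, a) (if h == i then N j a else N h a))%R in
  check v (c v) (fun a => minn Nb (N (cw_label (CRename i j e) v) a +
     #|[set u in cw_verts (CRename i j e) | cw_edges (CRename i j e) v u && (c u == a)]|))
  = check v (c v) (fun a => minn Nb (Ne (cw_label e v) a +
     #|[set u in cw_verts e | cw_edges e v u && (c u == a)]|)).
Proof.
move=> Ne; congr (check _ _ _); apply: functional_extensionality => a /=.
rewrite /Ne mxE; by case: (cw_label _ v == i).
Qed.

End Ren.

Theorem lemma5
  (d : Order.disp_t) (W : orderType d) (Error : W) (op : W -> W -> W) (one : W)
  (HW : is_weight_set Error op one)
  (V : finType) (E : rel V) (Esym : symmetric E) (Eirr : irreflexive E)
  (q : nat) (L : V -> {set 'I_q}) (HL : forall v, L v != set0)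
  (w : V -> 'I_q -> W) (Hw : forall v a, a \in L v -> w v a != Error)
  (check : V -> 'I_q -> ('I_q -> nat) -> bool)
  (Nb : nat) (HNb : 1 <= Nb <= #|V|)
  (Hcheck : forall v a (n : 'I_q -> nat),
      check v a n = check v a (fun b => minn Nb (n b)))
  (k : nat) (eG : cwexp V k) (HeG : cw_expression_of E eG)
  (i j : 'I_k) (e : cwexp V k) (Hsub : subexp (CRename i j e) eG)
  (C N : 'M['I_Nb.+1]_(k, q)) :
  let Ne : 'M['I_Nb.+1]_(k, q) :=
    (\matrix_(h, a) (if h == i then N j a else N h a))%R in
  let lam := lambda Error op one L w check in
  ((forall a, (C i a : nat) = 0) ->
     lam (CRename i j e) C N =
     \big[Order.min/Error]_(Ce : 'M['I_Nb.+1]_(k, q) |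
          [forall a, (C j a : nat) == minn Nb (Ce i a + Ce j a)] &&
          [forall h, forall a, (h != i) && (h != j) ==> (Ce h a == C h a)])
       lam e Ce Ne)
  /\
  (~ (forall a, (C i a : nat) = 0) -> lam (CRename i j e) C N = Error).
Proof.
move=> Ne lam.
have [ij _] : i != j /\ cw_wf e.
  by case: HeG => wf _ _ _ _; exact: (subexp_wf Hsub wf).
have HE : forall x : W, (x <= Error)%O by case: HW.
have fwd : forall c, is_CN_coloring L check (CRename i j e) C N c ->
    (forall a, (C i a : nat) = 0).
  move=> c /and3P [_ /forallP /(_ i) /forallP H _] a.
  move/(_ a)/eqP: H => <-. by have := cnt_ren e ij c i a; rewrite /cnt eqxx => ->.
split; last first.
  move=> nC; rewrite /lam /lambda big_pred0 // => c; apply/negP => /fwd; exact.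
move=> C0.
pose Ceof (c : {ffun V -> 'I_q}) : 'M['I_Nb.+1]_(k, q) :=
  (\matrix_(h, a) inord (minn Nb (cnt e c h a)))%R.
have CeofE : forall c h a, (Ceof c h a : nat) = minn Nb (cnt e c h a).
  by move=> c h a; rewrite mxE inordK // ltnS geq_minl.
pose P (Ce : 'M['I_Nb.+1]_(k, q)) :=
  [forall a, (C j a : nat) == minn Nb (Ce i a + Ce j a)] &&
  [forall h, forall a, (h != i) && (h != j) ==> (Ce h a == C h a)].
have B : forall c, is_CN_coloring L check (CRename i j e) C N c ->
    P (Ceof c) && is_CN_coloring L check e (Ceof c) Ne c.
  move=> c /and3P [H1 /forallP H2 /forallP H3].
  apply/andP; split; first (apply/andP; split).
  - apply/forallP => a; rewrite !CeofE.
    move/(_ j)/forallP/(_ a)/eqP: H2 => <-.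
    have := cnt_ren e ij c j a; rewrite eq_sym (negbTE ij) eqxx /cnt => ->.
    rewrite /cnt; apply/eqP; lia.
  - apply/forallP => h; apply/forallP => a; apply/implyP => /andP [hi hj].
    apply/eqP/val_inj => /=; rewrite CeofE.
    move/(_ h)/forallP/(_ a)/eqP: H2 => <-.
    by have := cnt_ren e ij c h a; rewrite (negbTE hi) (negbTE hj) /cnt => ->.
  apply/and3P; split => //.
    by apply/forallP => h; apply/forallP => a; rewrite CeofE.
  apply/forallP => v; have := H3 v; by rewrite chk_ren.
have Cc : forall Ce c, P Ce -> is_CN_coloring L check e Ce Ne c ->
    is_CN_coloring L check (CRename i j e) C N c.
  move=> Ce c /andP [/forallP P1 /forallP P2] /and3P [H1 /forallP H2 /forallP H3].
  apply/and3P; split => //; last first.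
    by apply/forallP => v; rewrite chk_ren; apply: H3.
  apply/forallP => h; apply/forallP => a.
  have := cnt_ren e ij c h a; rewrite /cnt => ->.
  case: ifP => [/eqP ->|hi]; first by rewrite C0.
  case: ifP => [/eqP ->|hj].
    move/(_ a)/eqP: P1 => ->.
    move/(_ i)/forallP/(_ a)/eqP: (H2) => <-.
    move/(_ j)/forallP/(_ a)/eqP: (H2) => <-.
    apply/eqP; lia.
  move/(_ h)/forallP/(_ a): P2; rewrite hi hj /= => /eqP <-.
  by move/(_ h)/forallP/(_ a): H2.
apply/le_anti/andP; split.
  apply: bm_le => // Ce PCe; apply: bm_le => // c cC.
  rewrite /lam /lambda /weight_of /=.
  exact: (@bm_ge _ _ Error _ (fun c0 => is_CN_coloring L check (CRename i j e) C N c0)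
     (fun c0 => weight_of op one w e c0) c (Cc _ _ PCe cC)).
apply: bm_le => // c cC.
have /andP [PC cC'] := B c cC.
apply: (le_trans (@bm_ge _ _ Error _ P (fun Ce => lam e Ce Ne) (Ceof c) PC)).
exact: (@bm_ge _ _ Error _ (fun c0 => is_CN_coloring L check e (Ceof c) Ne c0)
     (fun c0 => weight_of op one w e c0) c cC').
Qed.
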